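(* Let $i\ge 1$ be an integer and let $\mathcal L_1,\mathcal L_2$ be countable classes of linear orders such that each $L\in\mathcal L_1\cup\mathcal L_2$ is isomorphic to a linear order of the form $\omega\cdot\mathbf i+K$ where $\omega\cdot\mathbf i$ is not isomorphic to any interval of $K$. Then $\mathcal L_1=\mathcal L_2$ (as classes of isomorphism types) if and only if $\mathrm{Shuf}(\mathcal L_1)\cong\mathrm{Shuf}(\mathcal L_2)$. Moreover, if $\mathrm{Shuf}(\mathcal L_1)$ contains an interval isomorphic to $\omega\cdot(\mathbf{i+1})$, then there is a linear order $K$ with $\omega\cdot(\mathbf{i+1})+K\in\mathcal L_1$ (up to isomorphism).
   Context: $\mathbf n$ is the finite linear order with $n$ elements, $\omega$ the order type of $(\mathbb N;\le)$, $L_1+L_2$ the ordered sum ($L_1$ before $L_2$), and $L_1\cdot L_2$ is the sum over $L_2$ of copies of $L_1$ (so $\omega\cdot\mathbf i$ is $i$ copies of $\omega$ in sequence). An interval is a convex subset. For a countable set $I$, a dense $I$-coloring of $\mathbb Q$ is a map $c:\mathbb Q\to I$ taking every value of $I$ between any two rationals; for $\mathcal L=\{L_j\mid j\in I\}$, $\mathrm{Shuf}(\mathcal L)=\sum_{x\in\mathbb Q}L_{c(x)}$ (independent of $c$ up to isomorphism). ''$\mathcal L_1=\mathcal L_2$'' means every member of each class is isomorphic to a member of the other; ''$L\in\mathcal L$'' means $\mathcal L$ contains an order isomorphic to $L$. *)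

(* Defs.v *)
From mathcomp Require Import all_boot all_order all_algebra.
Set Implicit Arguments.
Unset Strict Implicit.
Unset Printing Implicit Defensive.
Import Order.TTheory GRing.Theory Num.Theory.

Record LO := MkLO { car :> Type; le : car -> car -> Prop }.
Arguments le {l} _ _.

Definition is_lin_order (L : LO) : Prop :=
  [/\ (forall x : L, le x x),
      (forall x y : L, le x y -> le y x -> x = y),
      (forall x y z : L, le x y -> le y z -> le x z)
    & (forall x y : L, le x y \/ le y x)].

Definition iso (L M : LO) : Prop :=
  exists f : L -> M, bijective f /\ forall x y : L, le x y <-> le (f x) (f y).

Definition lt_of (L : LO) (x y : L) : Prop := le x y /\ x <> y.

Definition LOsum (J : LO) (F : J -> LO) : LO :=
  @MkLO {j : J & F j}
    (fun p q => lt_of (projT1 p) (projT1 q) \/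
       exists (j : J) (x y : F j), p = existT _ j x /\ q = existT _ j y /\ le x y).

Definition LOplus (L1 L2 : LO) : LO :=
  @MkLO (L1 + L2)%type
    (fun p q => match p, q with
                | inl x, inl y => le x y
                | inl _, inr _ => True
                | inr _, inl _ => False
                | inr x, inr y => le x y
                end).

Definition LOtimes (L1 L2 : LO) : LO := LOsum (fun _ : L2 => L1).

Definition omegaLO : LO := @MkLO nat (fun m n => (m <= n)%N).
Definition finLO (n : nat) : LO := @MkLO 'I_n (fun a b => (a <= b)%N).
Definition ratLO : LO := @MkLO rat (fun x y => (x <= y)%R).

Definition omega_times (i : nat) : LO := LOtimes omegaLO (finLO i).

(* Intervals = convex subsets, with the induced order. *)
Definition convex (L : LO) (S : L -> Prop) : Prop :=
  forall x y z : L, S x -> S z -> le x y -> le y z -> S y.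
Definition subLO (L : LO) (S : L -> Prop) : LO :=
  @MkLO {x : L | S x} (fun a b => le (proj1_sig a) (proj1_sig b)).
Definition has_interval_iso (K M : LO) : Prop :=
  exists S : K -> Prop, convex S /\ iso M (subLO S).

Definition dense_coloring (I : Type) (c : rat -> I) : Prop :=
  forall p q : rat, (p < q)%R -> forall j : I, exists x : rat, (p < x < q)%R /\ c x = j.

Definition Shuf (I : Type) (c : rat -> I) (L : I -> LO) : LO :=
  LOsum (fun x : ratLO => L (c x)).

Definition same_class (I1 I2 : Type) (L1 : I1 -> LO) (L2 : I2 -> LO) : Prop :=
  (forall j1, exists j2, iso (L1 j1) (L2 j2)) /\
  (forall j2, exists j1, iso (L2 j2) (L1 j1)).

Definition good_form (i : nat) (L : LO) : Prop :=
  exists K : LO, is_lin_order K /\ iso L (LOplus (omega_times i) K) /\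
                 ~ has_interval_iso K (omega_times i).

(* Main.v *)
From mathcomp Require Import all_boot all_order all_algebra.
From mathcomp Require Import lra.
From Stdlib Require Import ClassicalEpsilon Classical Eqdep_dec ProofIrrelevance.
Require Import Defs.
Set Implicit Arguments. Unset Strict Implicit. Unset Printing Implicit Defensive.
Import Order.TTheory GRing.Theory Num.Theory.


Definition emb (A B : LO) (e : A -> B) := forall x y, le x y <-> le (e x) (e y).
Definition cvx (A B : LO) (e : A -> B) :=
  forall x y (z : B), le (e x) z -> le z (e y) -> exists w, z = e w.
Definition CE (A B : LO) (e : A -> B) := emb e /\ cvx e.

Section Lin.
Variable L : LO.
Hypothesis HL : is_lin_order L.
Lemma lrefl (x : L) : le x x. Proof. by case: HL. Qed.
Lemma lanti (x y : L) : le x y -> le y x -> x = y. Proof. by case: HL => _ H _ _; apply: H. Qed.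
Lemma ltrans (x y z : L) : le x y -> le y z -> le x z. Proof. by case: HL => _ _ H _; apply: H. Qed.
Lemma ltot (x y : L) : le x y \/ le y x. Proof. by case: HL. Qed.
Lemma lt_le (x y : L) : lt_of x y -> le x y. Proof. by case. Qed.
Lemma lt_nle (x y : L) : lt_of x y <-> ~ le y x.
Proof.
split; first by case=> H1 H2 H3; apply: H2; apply: lanti.
move=> H; split; first by case: (ltot x y) => // /H.
by move=> E; apply: H; rewrite E; apply: lrefl.
Qed.
Lemma lt_trans_le (x y z : L) : lt_of x y -> le y z -> lt_of x z.
Proof. move=> /lt_nle H1 H2; apply/lt_nle => H3; apply: H1; exact: ltrans H2 H3. Qed.
Lemma le_trans_lt (x y z : L) : le x y -> lt_of y z -> lt_of x z.
Proof. move=> H1 /lt_nle H2; apply/lt_nle => H3; apply: H2; exact: ltrans H3 H1. Qed.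
Lemma lt_total (x y : L) : x <> y -> lt_of x y \/ lt_of y x.
Proof. by move=> ne; case: (ltot x y) => H; [left|right]; split => // E; apply: ne. Qed.
Lemma lt_irr (x : L) : ~ lt_of x x. Proof. by case. Qed.
End Lin.

Lemma emb_inj (A B : LO) (e : A -> B) : is_lin_order A -> is_lin_order B -> emb e -> injective e.
Proof.
move=> HA HB He x y Exy; apply: (lanti HA); apply/He; rewrite Exy; exact: lrefl.
Qed.

Lemma emb_lt (A B : LO) (e : A -> B) : is_lin_order A -> is_lin_order B -> emb e ->
  forall x y, lt_of x y <-> lt_of (e x) (e y).
Proof.
move=> HA HB He x y; rewrite (lt_nle HA) (lt_nle HB); split=> H1 H2; apply: H1; exact/He.
Qed.

Lemma bij_of (A B : Type) (f : A -> B) : injective f -> (forall y, exists x, f x = y) -> bijective f.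
Proof.
move=> Hi Hs.
pose g y := proj1_sig (constructive_indefinite_description _ (Hs y)).
have Hg y : f (g y) = y by rewrite /g; case: constructive_indefinite_description.
by exists g => [x|y]; [apply: Hi; rewrite Hg|rewrite Hg].
Qed.

Lemma iso_refl (A : LO) : iso A A.
Proof. by exists id; split; [exists id|]. Qed.

Lemma iso_sym (A B : LO) : iso A B -> iso B A.
Proof.
case=> f [[g fK gK] Hf]; exists g; split; first by exists f.
by move=> x y; rewrite Hf !gK.
Qed.

Lemma iso_trans (A B C : LO) : iso A B -> iso B C -> iso A C.
Proof.
case=> f [bf Hf] [g [bg Hg]]; exists (g \o f); split; first exact: bij_comp.
by move=> x y; rewrite Hf Hg.
Qed.

Lemma iso_CE (A B : LO) (f : A -> B) : bijective f -> emb f -> CE f.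
Proof.
case=> g fK gK Hf; split=> // x y z _ _; by exists (g z); rewrite gK.
Qed.

Lemma CE_comp (A B C : LO) (e1 : A -> B) (e2 : B -> C) : CE e1 -> CE e2 -> CE (e2 \o e1).
Proof.
case=> E1 C1 [E2 C2]; split=> [x y|x y z H1 H2]; first by rewrite E1 E2.
case: (C2 (e1 x) (e1 y) z H1 H2) => w Ez; subst z.
have H1' := proj2 (E2 _ _) H1; have H2' := proj2 (E2 _ _) H2.
case: (C1 _ _ _ H1' H2') => v ->; by exists v.
Qed.

Lemma plus_lin (A B : LO) : is_lin_order A -> is_lin_order B -> is_lin_order (LOplus A B).
Proof.
move=> HA HB; split.
- by case=> x /=; apply: lrefl.
- case=> x [] y //= H1 H2; f_equal; exact: lanti H1 H2.
- by case=> x [] y [] z //=; apply: ltrans.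
- by case=> x [] y /=; auto; apply: ltot.
Qed.

Lemma CE_inl (A B : LO) : CE (@inl A B : A -> LOplus A B).
Proof.
split=> // x y [z|z] //= _ H; by exists z.
Qed.

Lemma CE_inr_factor (A B C : LO) (e : C -> LOplus A B) (d : B) :
  CE e -> (forall c, exists z, e c = inr z) ->
  exists e' : C -> B, CE e' /\ forall c, e c = inr (e' c).
Proof.
move=> [He Hc] Hr.
pose e' c := match e c with inr z => z | inl _ => d end.
have E c : e c = inr (e' c) by rewrite /e'; case: (Hr c) => z ->.
exists e'; split=> //; split=> [x y|x y z H1 H2]; first by rewrite He !E.
have [w Hw] : exists w, inr z = e w by apply: (Hc x y); rewrite E //.
by exists w; move: Hw; rewrite E => -[].
Qed.

Definition om {i} (k : 'I_i) (n : nat) : omega_times i := existT (fun _ : finLO i => omegaLO) k n.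

Lemma le_om i (k k' : 'I_i) n n' :
  le (om k n) (om k' n') <-> (k < k')%N \/ (k = k' /\ (n <= n')%N).
Proof.
split.
- case=> [[/= H1 H2]|[j [x [y [E1 [E2 H]]]]]].
    by left; rewrite ltn_neqAle H1 andbT; apply/eqP => E; apply: H2; apply: val_inj.
  right; have:= f_equal (@projT1 _ _) E1; have:= f_equal (@projT1 _ _) E2.
  have:= f_equal (fun s : omega_times i => (projT2 s : nat)) E1.
  have:= f_equal (fun s : omega_times i => (projT2 s : nat)) E2.
  by rewrite /om /= => -> -> -> ->.
- case=> [H|[-> H]]; last by right; exists k', n, n'.
  left; split; first by rewrite /= ltnW.
  move=> E; have E' : k = k' by change (projT1 (om k n) = projT1 (om k' n')); rewrite E.
  by move: H; rewrite E' ltnn.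
Qed.

Lemma om_eta i (s : omega_times i) : s = om (projT1 s) (projT2 s).
Proof. by case: s. Qed.

Lemma om_lin i : is_lin_order (omega_times i).
Proof.
split.
- by move=> s; rewrite (om_eta s); apply/le_om; right.
- move=> s t; rewrite (om_eta s) (om_eta t) !le_om.
  case=> [H1|[E1 H1]] [H2|[E2 H2]].
  + by move: (ltn_trans H1 H2); rewrite ltnn.
  + by move: H1; rewrite E2 ltnn.
  + by move: H2; rewrite E1 ltnn.
  + by rewrite E1; congr om; apply/eqP; rewrite eqn_leq H1 H2.
- move=> s t u; rewrite (om_eta s) (om_eta t) (om_eta u) !le_om.
  case=> [H1|[E1 H1]] [H2|[E2 H2]].
  + by left; exact: ltn_trans H1 H2.
  + by left; rewrite -E2.
  + by left; rewrite E1.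
  + by right; split; [rewrite E1|exact: leq_trans H1 H2].
- move=> s t; rewrite (om_eta s) (om_eta t) !le_om.
  case: (ltngtP (projT1 s) (projT1 t)) => H; [left; left|right; left|] => //.
  have E : projT1 s = projT1 t by apply: val_inj.
  case: (leqP (projT2 s) (projT2 t)) => H'; [left|right]; right; split => //.
  exact: ltnW.
Qed.

Lemma lt_om i (k k' : 'I_i) n n' :
  lt_of (om k n) (om k' n') <-> (k < k')%N \/ (k = k' /\ (n < n')%N).
Proof.
rewrite (lt_nle (om_lin i)) le_om; split.
- move=> H; case: (ltngtP k k') => H1; first by left.
    by exfalso; apply: H; left.
  have E : k = k' by apply: val_inj.
  right; split=> //; rewrite ltnNge; apply/negP=> H2; apply: H; right; split => //.
- case=> [H|[E H]] [H1|[E1 H1]].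
  + by move: (ltn_trans H H1); rewrite ltnn.
  + by move: H; rewrite E1 ltnn.
  + by move: H1; rewrite E ltnn.
  + by move: (leq_ltn_trans H1 H); rewrite ltnn.
Qed.

Definition NP (M : LO) (m : M) := forall q, lt_of q m -> exists r, lt_of q r /\ lt_of r m.

Lemma CE_NP n (M : LO) (e : omega_times n -> M) : is_lin_order M -> CE e ->
  forall j (Hj : (j < n)%N), (0 < j)%N -> NP (e (om (Ordinal Hj) 0)).
Proof.
move=> HM [He Hc] j Hj j0 q Hq.
have Hj' : (j.-1 < n)%N by rewrite (leq_ltn_trans (leq_pred j)).
have Hlt : lt_of (om (Ordinal Hj') 0) (om (Ordinal Hj) 0) by apply/lt_om; left => /=; rewrite prednK.
have HeL := emb_lt (om_lin n) HM He.
case: (classic (lt_of q (e (om (Ordinal Hj') 0)))) => H.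
- by exists (e (om (Ordinal Hj') 0)); split; last exact/HeL.
- have {}H : le (e (om (Ordinal Hj') 0)) q.
    by apply: NNPP => H'; apply: H; apply/(lt_nle HM).
  case: (Hc (om (Ordinal Hj') 0) (om (Ordinal Hj) 0) q H (lt_le Hq)) => w Ew; subst q.
  move: Hq; rewrite -HeL (om_eta w) lt_om => Hw.
  exists (e (om (projT1 w) (projT2 w).+1)); split; apply/HeL; apply/lt_om.
  + by right; split.
  + by case: Hw => [H1|[E1 H1]]; left => //; rewrite E1.
Qed.

Lemma lt_inl (A B : LO) (a b : A) : lt_of (inl a : LOplus A B) (inl b) <-> lt_of a b.
Proof. split; case=> H1 H2; split=> // E; apply: H2; [by rewrite E|by case: E]. Qed.

Lemma le_inl_is_inl (A B : LO) (x : LOplus A B) a : le x (inl a) -> exists a', x = inl a'.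
Proof. by case: x => [a'|b'] //= _; exists a'. Qed.

Lemma NP_plus_inl i (K : LO) (k : 'I_i) p : is_lin_order K ->
  NP (inl (om k p) : LOplus (omega_times i) K) -> p = 0.
Proof.
move=> HK; case: p => // p H.
have HM := plus_lin (om_lin i) HK.
have Hq : lt_of (inl (om k p) : LOplus (omega_times i) K) (inl (om k p.+1)).
  by apply/lt_inl/lt_om; right.
case: (H _ Hq) => r [H1 H2].
case: (le_inl_is_inl (lt_le H2)) => s Es; subst r.
move: H1 H2; rewrite !lt_inl (om_eta s) !lt_om.
case=> [Hk|[Ek Hp]]; case=> [Hk'|[Ek' Hp']].
- by move: (ltn_trans Hk Hk'); rewrite ltnn.
- by move: Hk; rewrite Ek' ltnn.
- by move: Hk'; rewrite Ek ltnn.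
- by move: (leq_ltn_trans Hp Hp'); rewrite ltnn.
Qed.

Lemma count_inl n m (K : LO) (e : omega_times n -> LOplus (omega_times m) K) :
  is_lin_order K -> CE e ->
  forall J (HJ : (J < n)%N), (exists s, e (om (Ordinal HJ) 0) = inl s) ->
  forall j (Hj : (j < n)%N), (j <= J)%N ->
  exists k p, e (om (Ordinal Hj) 0) = inl (om k p) /\ (j <= k)%N /\ ((0 < j)%N -> p = 0).
Proof.
move=> HK [He Hc] J HJ [s0 Es0].
have HM := plus_lin (om_lin m) HK.
have Hinl j (Hj : (j < n)%N) : (j <= J)%N -> exists k p, e (om (Ordinal Hj) 0) = inl (om k p).
  move=> HjJ.
  have : le (e (om (Ordinal Hj) 0)) (e (om (Ordinal HJ) 0)).
    apply/He/le_om; rewrite leq_eqVlt in HjJ; case/orP: HjJ => H; last by left.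
    by right; split => //; apply: val_inj; exact/eqP.
  rewrite Es0 => /le_inl_is_inl [a ->]; rewrite (om_eta a); by do 2 eexists.
elim=> [|j IH] Hj HjJ.
  by case: (Hinl _ Hj HjJ) => k [p ->]; exists k, p.
case: (Hinl _ Hj HjJ) => k' [p' E']; exists k', p'; split => //.
have Hj' : (j < n)%N by exact: ltnW.
have p0 : p' = 0.
  apply: (NP_plus_inl (k := k') HK); rewrite -E'.
  exact: (@CE_NP _ _ _ HM (conj He Hc) _ Hj (ltn0Sn j)).
split; last by move=> _.
case: (IH Hj' (ltnW HjJ)) => k [p [E [Hk _]]].
have : lt_of (om (Ordinal Hj') 0) (om (Ordinal Hj) 0) by apply/lt_om; left.
rewrite (emb_lt (om_lin n) HM He) E E' lt_inl lt_om p0.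
case=> [H|[_ H]] //; exact: leq_ltn_trans Hk H.
Qed.

Lemma CE_widen i :
  CE (fun s : omega_times i => om (widen_ord (leqnSn i) (projT1 s)) (projT2 s) : omega_times i.+1).
Proof.
split.
- move=> s t; rewrite {1}(om_eta s) {1}(om_eta t) !le_om /=.
  split; case=> [H|[E H]]; (try by left); right; split => //.
  + by rewrite E.
  + apply: val_inj; move: (f_equal val E) => /= E2; exact: E2.
- move=> s t z H1 H2.
  move: H2; rewrite (om_eta z) le_om /= => H2.
  have Hz : (projT1 z < i)%N.
    by case: H2 => [H|[E _]]; [exact: ltn_trans H (ltn_ord _)|rewrite E /=; exact: ltn_ord].
  exists (om (Ordinal Hz) (projT2 z)); rewrite /=; congr om; exact: val_inj.
Qed.

Lemma hi_CE (K M : LO) : has_interval_iso K M -> exists e : M -> K, CE e.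
Proof.
case=> S [HS [f [[g fK gK] Hf]]].
exists (fun m => proj1_sig (f m)); split => // x y z H1 H2.
have Sz : S z by apply: (HS _ _ _ (proj2_sig (f x)) (proj2_sig (f y))).
by exists (g (exist _ z Sz)); rewrite gK.
Qed.

Lemma sub_lin (K : LO) (S : K -> Prop) : is_lin_order K -> is_lin_order (subLO S).
Proof.
move=> HK; split.
- by move=> x; exact: (lrefl HK).
- by move=> [x px] [y py] /= H1 H2; move: px py; rewrite (lanti HK H1 H2) => px py; rewrite (proof_irrelevance _ px py).
- by move=> x y z; exact: (ltrans HK).
- by move=> x y; exact: (ltot HK).
Qed.

Lemma CE_hi (K M : LO) (e : M -> K) : is_lin_order M -> is_lin_order K -> CE e -> has_interval_iso K M.
Proof.
move=> HM HK [He Hc].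
exists (fun z => exists w, z = e w); split.
  by move=> x y z [a ->] [b ->] H1 H2; apply: Hc H1 H2.
exists (fun m => exist _ (e m) (ex_intro _ m erefl)); split => //.
apply: bij_of.
  move=> a b E; apply: (emb_inj HM HK He); exact: (f_equal (@proj1_sig _ _) E).
move=> [z [w Ew]]; exists w; subst z; congr exist; exact: proof_irrelevance.
Qed.

Lemma rat_dec : forall x y : rat, {x = y} + {x <> y}.
Proof. exact: eq_comparable. Qed.

Lemma existT_inj (F : rat -> LO) x (a b : F x) :
  existT (fun y => car (F y)) x a = existT _ x b -> a = b.
Proof. exact: (inj_pair2_eq_dec _ rat_dec). Qed.

Section Sums.
Variable F : ratLO -> LO.
Local Notation S := (LOsum F).

Lemma le_sum_eq x (a b : F x) : @le S (existT _ x a) (existT _ x b) <-> le a b.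
Proof.
split.
- case=> [[_ H]|[j [a' [b' [E1 [E2 H]]]]]] //.
  have Ej : x = j by exact: (f_equal (@projT1 _ _) E1).
  subst j; by rewrite (existT_inj E1) (existT_inj E2).
- by move=> H; right; exists x, a, b.
Qed.

Lemma le_sum_neq x y (a : F x) (b : F y) : x <> y ->
  (@le S (existT _ x a) (existT _ y b) <-> (x < y)%R).
Proof.
move=> ne; split.
- case=> [[/= H1 H2]|[j [a' [b' [E1 [E2 H]]]]]].
    by rewrite lt_neqAle H1 andbT; apply/eqP.
  exfalso; apply: ne.
  by move: (f_equal (@projT1 _ _) E1) (f_equal (@projT1 _ _) E2) => /= -> ->.
- by move=> H; left; split => //=; apply: ltW.
Qed.

Lemma sum_lin : (forall x, is_lin_order (F x)) -> is_lin_order S.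
Proof.
move=> HF; split.
- by case=> x a; apply/le_sum_eq; apply: lrefl.
- case=> x a [y b]; case: (rat_dec x y) => [E|ne].
    subst y; rewrite !le_sum_eq => H1 H2; by rewrite (lanti (HF x) H1 H2).
  rewrite !le_sum_neq // => [H1 H2|]; last by move=> E; apply: ne.
  by move: (lt_trans H1 H2); rewrite ltxx.
- case=> x a [y b] [z c].
  case: (rat_dec x y) => [Exy|nxy]; case: (rat_dec y z) => [Eyz|nyz].
  + subst; rewrite !le_sum_eq; exact: ltrans.
  + subst; rewrite le_sum_eq !le_sum_neq //; by move=> *.
  + subst; rewrite le_sum_eq !le_sum_neq //; by move=> *.
  + rewrite (le_sum_neq _ _ nxy) (le_sum_neq _ _ nyz) => H1 H2.
    have H := lt_trans H1 H2.
    by apply/le_sum_neq => // E; move: H; rewrite E ltxx.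
- case=> x a [y b]; case: (rat_dec x y) => [E|ne].
    subst y; rewrite !le_sum_eq; exact: ltot.
  rewrite (le_sum_neq _ _ ne) le_sum_neq; last by move=> E; apply: ne.
  by case: (ltgtP x y) => E; auto; exfalso; apply: ne.
Qed.

Lemma CE_block x : CE (fun a : F x => existT (fun y => car (F y)) x a : S).
Proof.
split; first by move=> a b; rewrite le_sum_eq.
move=> a b [y c] H1 H2.
case: (rat_dec x y) => [E|ne].
  subst y; by exists c.
move: H1 H2; rewrite !le_sum_neq // => [H1 H2|]; last by move=> E; apply: ne.
by move: (lt_trans H1 H2); rewrite ltxx.
Qed.

Lemma factor_block (A : LO) (e : A -> S) x : (forall a, projT1 (e a) = x) -> CE e ->
  exists e' : A -> F x, CE e' /\ forall a, e a = existT _ x (e' a).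
Proof.
move=> Hx [He Hc].
have H a : exists b, e a = existT _ x b.
  by move: (Hx a); case: (e a) => y b /= E; subst y; exists b.
pose e' a := proj1_sig (constructive_indefinite_description _ (H a)).
have E a : e a = existT _ x (e' a).
  by rewrite /e'; case: constructive_indefinite_description.
exists e'; split=> //; split.
  by move=> a b; rewrite He !E le_sum_eq.
move=> a b z H1 H2.
have [w Ew] : exists w, existT _ x z = e w by apply: (Hc a b); rewrite E le_sum_eq.
by exists w; move: Ew; rewrite E => /existT_inj.
Qed.
End Sums.


Lemma ge_inr_is_inr (A B : LO) (x : LOplus A B) (b : B) : le (inr b : LOplus A B) x -> exists b', x = inr b'.
Proof. by case: x => [a'|b'] //= _; exists b'. Qed.

Lemma om_min i (o : 'I_i) (s : omega_times i) : nat_of_ord o = 0 -> le (om o 0) s.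
Proof.
move=> o0; rewrite (om_eta s) le_om.
case: (posnP (projT1 s)) => H; last by left; rewrite o0.
by right; split => //; apply: val_inj; rewrite /= o0 H.
Qed.

Lemma all_inr_absurd i (K : LO) (e : omega_times i -> LOplus (omega_times i) K) (o : 'I_i) z :
  is_lin_order K -> ~ has_interval_iso K (omega_times i) -> CE e ->
  nat_of_ord o = 0 -> e (om o 0) = inr z -> False.
Proof.
move=> HK Hno [He Hc] o0 Ez.
have Hr c : exists z', e c = inr z'.
  apply: (@ge_inr_is_inr _ _ _ z); rewrite -Ez; apply/He; exact: om_min.
case: (CE_inr_factor z (conj He Hc) Hr) => e' [He' _].
by apply: Hno; apply: (CE_hi (om_lin i) HK He').
Qed.

Lemma no_two i (K : LO) : (1 <= i)%N -> is_lin_order K -> ~ has_interval_iso K (omega_times i) ->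
  forall e1 e2 : omega_times i -> LOplus (omega_times i) K, CE e1 -> CE e2 ->
  (forall a b, lt_of (e1 a) (e2 b)) -> False.
Proof.
move=> i1 HK Hno e1 e2 C1 C2 Hlt.
have HM := plus_lin (om_lin i) HK.
pose o : 'I_i := Ordinal i1.
have [s Es] : exists s, e2 (om o 0) = inl s.
  case E: (e2 (om o 0)) => [s|z]; first by exists s.
  by exfalso; apply: (all_inr_absurd HK Hno C2 (erefl _ : nat_of_ord o = 0) E).
move: Es; rewrite (om_eta s); set k := projT1 s; set n := projT2 s => Es.
have HJ : (i.-1 < i)%N by rewrite prednK.
have [s1 Es1] : exists s1, e1 (om (Ordinal HJ) 0) = inl s1.
  apply: (@le_inl_is_inl _ _ _ (om k n)); rewrite -Es; exact: lt_le (Hlt _ _).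
have [k1 [p1 [E1 [Hk1 _]]]] := count_inl HK C1 (ex_intro _ s1 Es1) HJ (leqnn _).
have Ek1 : nat_of_ord k1 = i.-1.
  by apply/eqP; rewrite eqn_leq Hk1 andbT -ltnS prednK.
have Ekk : k1 = k.
  have := Hlt (om (Ordinal HJ) 0) (om o 0); rewrite E1 Es lt_inl lt_om.
  case=> [H|[-> //]]; exfalso; move: H; rewrite Ek1 ltnNge -ltnS prednK //.
  by rewrite ltn_ord.
have Hm m : exists q, e1 (om (Ordinal HJ) m) = inl (om k q) /\ (m <= q)%N /\ (q < n)%N.
  elim: m => [|m [q [Eq [Hmq Hqn]]]].
    exists p1; rewrite E1 Ekk; split => //; split => //.
    have := Hlt (om (Ordinal HJ) 0) (om o 0); rewrite E1 Es Ekk lt_inl lt_om.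
    by case=> [|[]//]; rewrite ltnn.
  have Hlt1 := Hlt (om (Ordinal HJ) m.+1) (om o 0); rewrite Es in Hlt1.
  have [s' Es'] := le_inl_is_inl (lt_le Hlt1).
  move: Es' Hlt1; rewrite (om_eta s') => Es'; rewrite Es' lt_inl lt_om => H2.
  have : lt_of (om (Ordinal HJ) m) (om (Ordinal HJ) m.+1) by apply/lt_om; right.
  rewrite (emb_lt (om_lin i) HM (proj1 C1)) Eq Es' lt_inl lt_om => H1.
  case: H1 => [H1|[E H1]]; case: H2 => [H2|[E2 H2]].
  - by move: (ltn_trans H1 H2); rewrite ltnn.
  - by move: H1; rewrite E2 ltnn.
  - by move: H2; rewrite -E ltnn.
  - by exists (projT2 s'); rewrite -E; split => //; split => //; exact: leq_ltn_trans Hmq H1.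
have [q [_ [H1 H2]]] := Hm n.
by move: (leq_ltn_trans H1 H2); rewrite ltnn.
Qed.

Lemma cmin (P : nat -> Prop) n : P n -> exists m, P m /\ forall k, P k -> (m <= k)%N.
Proof.
elim/ltn_ind: n => n IH Pn.
case: (classic (exists k, P k /\ (k < n)%N)) => [[k [Pk lt]]|H]; first exact: IH k lt Pk.
exists n; split => // k Pk; rewrite leqNgt; apply/negP => lt; apply: H; by exists k.
Qed.

Lemma le_om' i (k k' : 'I_i) n n' :
  le (om k n) (om k' n') <-> (k < k')%N \/ ((k : nat) = k' /\ (n <= n')%N).
Proof.
rewrite le_om; split; case=> [H|[E H]]; auto; right; split => //; first by rewrite E.
exact: val_inj.
Qed.

Lemma le_inl (A B : LO) (a b : A) : le (inl a : LOplus A B) (inl b) <-> le a b. Proof. by []. Qed.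
Lemma le_inr (A B : LO) (a b : B) : le (inr a : LOplus A B) (inr b) <-> le a b. Proof. by []. Qed.
Lemma le_inl_inr (A B : LO) (a : A) (b : B) : le (inl a : LOplus A B) (inr b) <-> True. Proof. by []. Qed.
Lemma le_inr_inl (A B : LO) (a : A) (b : B) : le (inr b : LOplus A B) (inl a) <-> False. Proof. by []. Qed.

Definition isr (A B : LO) (x : LOplus A B) := if x is inr _ then true else false.

Lemma prefix_ext i (K : LO) : (1 <= i)%N -> is_lin_order K -> ~ has_interval_iso K (omega_times i) ->
  forall e : omega_times i.+1 -> LOplus (omega_times i) K, CE e ->
  exists K' : LO, is_lin_order K' /\ iso (LOplus (omega_times i.+1) K') (LOplus (omega_times i) K).
Proof.
case: i => [//|i] _ HK Hno e HC; have [He Hc] := HC.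
have HM := plus_lin (om_lin i.+1) HK.
have Hup a b : le a b -> isr (e a) -> isr (e b).
  move=> /He; case: (e a) => [s|z] //= H _; move: H; by case: (e b).
have [z0 Ez0] : exists z0, e (om (Ordinal (ltnSn i.+1)) 0) = inr z0.
  case E: (e _) => [s|z]; last by exists z.
  have [k [p [_ [Hk _]]]] := count_inl HK HC (ex_intro _ s E) (ltnSn i.+1) (leqnn _).
  by move: (ltn_ord k); rewrite ltnNge Hk.
have [s0 Es0] : exists s0, e (om ord0 0) = inl s0.
  case E0: (e _) => [s|z]; first by exists s.
  exfalso; apply: (all_inr_absurd (o := ord0) (z := z) HK Hno (CE_comp (CE_widen _) HC)) => //=.
  by rewrite -E0; congr (e (om _ 0)); apply: val_inj.
pose P k := (k <= i.+1)%N /\ exists n, isr (e (om (inord k) n)).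
have PI : P i.+1.
  split => //; exists 0.
  have -> : (inord i.+1 : 'I_i.+2) = Ordinal (ltnSn i.+1) by apply: val_inj; rewrite /= inordK.
  by rewrite Ez0.
have [k0 [[Hk0 [n1 Hn1]] Hmin]] := cmin PI.
have [n0 [Hn0 Hminn]] := cmin (P := fun n => isr (e (om (inord k0) n))) Hn1.
pose w m := match e (om (inord k0) (n0 + m)) with inr z => z | inl _ => z0 end.
have Ew m : e (om (inord k0) (n0 + m)) = inr (w m).
  have H : le (om (inord k0) n0 : omega_times i.+2) (om (inord k0) (n0 + m)) by apply/le_om'; right; split => //; exact: leq_addr.
  move: (Hup _ _ H Hn0); rewrite /w; by case: (e _).
have F1 m m' : le (w m) (w m') <-> (m <= m')%N.
  change (le (inr (w m) : LOplus (omega_times i.+1) K) (inr (w m')) <-> (m <= m')%N).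
  rewrite -!Ew -He le_om' ltnn leq_add2l; split; [by case=> [|[]]|by right].
have F2 z m : le z (w m) -> exists m', z = w m'.
  move=> Hz.
  have H1 : le (e (om ord0 0)) (inr z : LOplus (omega_times i.+1) K) by rewrite Es0.
  have H2 : le (inr z : LOplus (omega_times i.+1) K) (e (om (inord k0) (n0 + m))) by rewrite Ew.
  have [a Ea] := Hc _ _ _ H1 H2.
  have Hra : isr (e a) by rewrite -Ea.
  move: Ea Hra H2; rewrite (om_eta a); set k' := projT1 a; set n' := projT2 a => Ea Hra H2.
  have Pk' : P k' by split; [rewrite -ltnS; exact: ltn_ord|exists n'; rewrite inord_val].
  have Hk' := Hmin _ Pk'.
  move: H2; rewrite Ea -He le_om' inordK // => -[H|[E H]].
    by move: (leq_ltn_trans Hk' H); rewrite ltnn.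
  have Ek : k' = inord k0 by apply: val_inj => /=; rewrite inordK. 
  rewrite Ek in Hra Ea.
  have Hn' := Hminn _ Hra.
  have Ew' : e (om (inord k0) n') = inr (w (n' - n0)) by rewrite -Ew subnKC.
  exists (n' - n0); move: Ea; rewrite Ew'; by case.
have F3 (z : K) : (~ exists m, z = w m) -> forall m, lt_of (w m) z.
  move=> Hz m; apply/(lt_nle HK) => H; apply: Hz; exact: F2 H.
pose K' := subLO (fun z : K => ~ exists m, z = w m).
have HK' : is_lin_order K' by apply: sub_lin.
pose Phi (x : LOplus (omega_times i.+2) K') : LOplus (omega_times i.+1) K :=
  match x with
  | inl s => if (projT1 s < i.+1)%N then inl (om (inord (projT1 s)) (projT2 s)) else inr (w (projT2 s))
  | inr z => inr (proj1_sig z)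
  end.
have PhiL1 (k : 'I_i.+2) (n : nat) : (k < i.+1)%N -> Phi (inl (om k n)) = inl (om (inord k) n).
  by move=> H; rewrite /Phi /= H.
have PhiL2 (k : 'I_i.+2) (n : nat) : ~~ (k < i.+1)%N -> Phi (inl (om k n)) = inr (w n).
  by move=> H; rewrite /Phi /= (negbTE H).
have PhiR z : Phi (inr z) = inr (proj1_sig z) by [].
have Hemb : emb Phi.
  move=> [[k n]|[z Hz]] [[k' n']|[z' Hz']].
  - change (le (inl (om k n) : LOplus (omega_times i.+2) K') (inl (om k' n')) <->
            le (Phi (inl (om k n))) (Phi (inl (om k' n')))).
    have Hk : (k <= i.+1)%N by rewrite -ltnS.
    have Hk' : (k' <= i.+1)%N by rewrite -ltnS.
    case: (ltnP k i.+1) => H1; case: (ltnP k' i.+1) => H2.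
    + rewrite (PhiL1 _ _ H1) (PhiL1 _ _ H2) !le_inl le_om' le_om' !inordK //.
    + rewrite (PhiL1 _ _ H1) (PhiL2 _ _ (negbT (leq_gtF H2))) le_inl_inr le_inl.
      split=> _ //; apply/le_om'; left; exact: leq_trans H1 H2.
    + rewrite (PhiL2 _ _ (negbT (leq_gtF H1))) (PhiL1 _ _ H2) le_inr_inl le_inl.
      split=> // /le_om' => -[H|[E _]].
        by move: (leq_trans H2 H1); rewrite ltnNge (ltnW H).
      by move: H2; rewrite -E ltnNge H1.
    + rewrite (PhiL2 _ _ (negbT (leq_gtF H1))) (PhiL2 _ _ (negbT (leq_gtF H2))) le_inl le_inr.
      have Ek : (k : nat) = k' by apply/eqP; rewrite eqn_leq (leq_trans Hk H2) (leq_trans Hk' H1).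
      rewrite F1 le_om' Ek ltnn; split; [by case=> [|[]]|by right].
  - change (le (inl (om k n) : LOplus (omega_times i.+2) K') (inr (exist _ z' Hz')) <->
            le (Phi (inl (om k n))) (Phi (inr (exist _ z' Hz')))).
    rewrite PhiR le_inl_inr.
    case: (ltnP k i.+1) => H1.
      by rewrite (PhiL1 _ _ H1) le_inl_inr.
    rewrite (PhiL2 _ _ (negbT (leq_gtF H1))) le_inr.
    by split => // _; apply: lt_le (F3 _ Hz' n).
  - change (le (inr (exist _ z Hz) : LOplus (omega_times i.+2) K') (inl (om k' n')) <->
            le (Phi (inr (exist _ z Hz))) (Phi (inl (om k' n')))).
    rewrite PhiR le_inr_inl.
    case: (ltnP k' i.+1) => H1.
      by rewrite (PhiL1 _ _ H1) le_inr_inl.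
    rewrite (PhiL2 _ _ (negbT (leq_gtF H1))) le_inr.
    split => // H; exfalso.
    by have := F3 _ Hz n'; rewrite (lt_nle HK) => /(_ H).
  - by [].
have Hsurj : forall y, exists x, Phi x = y.
  case=> [s|z].
    rewrite (om_eta s); exists (inl (om (inord (projT1 s)) (projT2 s))).
    have Hs : (projT1 s <= i.+1)%N by exact: ltnW (ltn_ord _).
    rewrite /= inordK ?ltn_ord //; congr (inl (om _ _)); apply: val_inj; rewrite /= inordK //.
  case: (classic (exists m, z = w m)) => [[m ->]|Hz].
    exists (inl (om (inord i.+1) m)); by rewrite /= inordK // ltnn.
  by exists (inr (exist _ z Hz)).
exists K'; split => //; exists Phi; split => //.
apply: bij_of => //; apply: (emb_inj (plus_lin (om_lin _) HK') HM Hemb).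
Qed.


Definition D (S : LO) i (p q : S) := exists e1 e2 : omega_times i -> S,
  [/\ CE e1, CE e2, (forall a b, lt_of (e1 a) (e2 b)),
      (forall a, le p (e1 a) /\ le (e1 a) q) & (forall a, le p (e2 a) /\ le (e2 a) q)].

Lemma D_transport (S T : LO) i (f : S -> T) (p q : S) : is_lin_order S -> is_lin_order T ->
  CE f -> D i p q -> D i (f p) (f q).
Proof.
move=> HS HT Cf [e1 [e2 [C1 C2 Hlt H1 H2]]].
exists (f \o e1), (f \o e2); split.
- exact: CE_comp.
- exact: CE_comp.
- by move=> a b; apply/(emb_lt HS HT (proj1 Cf)).
- by move=> a; case: (H1 a) => A B; split; apply/(proj1 Cf).
- by move=> a; case: (H2 a) => A B; split; apply/(proj1 Cf).
Qed.

Section ShufFacts.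
Variables (i : nat) (I : Type) (c : rat -> I) (L : I -> LO).
Hypothesis i1 : (1 <= i)%N.
Hypothesis HL : forall j, is_lin_order (L j).
Hypothesis HG : forall j, good_form i (L j).
Local Notation S := (Shuf c L).
Local Notation F := (fun x : ratLO => L (c x)).

Lemma S_lin : is_lin_order S.
Proof. exact: (sum_lin (F := F)). Qed.

Lemma le_proj (s t : S) : le s t -> (projT1 s <= projT1 t)%R.
Proof.
case: s => x a; case: t => y b /=.
case: (rat_dec x y) => [E|ne]; first by subst y; move=> _; exact: lexx.
by move/(le_sum_neq (F := F) _ _ ne) => /ltW.
Qed.

Lemma le_proj_neq (s t : S) : projT1 s <> projT1 t -> (le s t <-> (projT1 s < projT1 t)%R).
Proof. case: s => x a; case: t => y b /= ne; exact: (le_sum_neq (F := F)). Qed.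

Lemma lt_proj_neq (s t : S) : (projT1 s < projT1 t)%R -> lt_of s t.
Proof.
move=> H; have ne : projT1 s <> projT1 t by move=> E; move: H; rewrite E ltxx.
by split; [apply/le_proj_neq|move=> E; apply: ne; rewrite E].
Qed.

Lemma block_embed x : exists e : omega_times i -> S, CE e /\ forall a, projT1 (e a) = x.
Proof.
case: (HG (c x)) => K [HK [Hiso _]].
case: (iso_sym Hiso) => g [bg Hg].
have C2 := CE_comp (CE_comp (CE_inl (omega_times i) K) (iso_CE bg Hg)) (CE_block F x).
by eexists; split; first exact: C2.
Qed.

Lemma block_first x : exists s : S, projT1 s = x /\ forall b, le s (existT _ x b).
Proof.
case: (HG (c x)) => K [HK [[f [[g fK gK] Hf]] _]].
exists (existT (fun y => car (F y)) x (g (inl (om (Ordinal i1) 0)))); split => // b.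
apply/(le_sum_eq (F := F)); apply/Hf; rewrite gK.
case: (f b) => [s|z] //=; exact: om_min.
Qed.

Lemma D_diff (p q : S) : (projT1 p < projT1 q)%R -> D i p q.
Proof.
move=> H; set x := projT1 p in H; set y := projT1 q in H.
have [e1 [C1 E1]] := block_embed ((x + x + y) / 3%:R)%R.
have [e2 [C2 E2]] := block_embed ((x + y + y) / 3%:R)%R.
exists e1, e2; split => //.
- by move=> a b; apply: lt_proj_neq; rewrite E1 E2; lra.
- by move=> a; split; apply: lt_le; apply: lt_proj_neq; rewrite E1 -/x -/y; lra.
- by move=> a; split; apply: lt_le; apply: lt_proj_neq; rewrite E2 -/x -/y; lra.
Qed.

Lemma D_same (p q : S) : projT1 p = projT1 q -> ~ D i p q.
Proof.
move=> Epq [e1 [e2 [C1 C2 Hlt H1 H2]]].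
set x := projT1 p.
have Hx (e : omega_times i -> S) : (forall a, le p (e a) /\ le (e a) q) -> forall a, projT1 (e a) = x.
  move=> H a; case: (H a) => /le_proj A /le_proj B; apply/eqP; rewrite eq_le A andbT.
  by rewrite /x Epq.
have [e1' [C1' E1]] := factor_block (Hx _ H1) C1.
have [e2' [C2' E2]] := factor_block (Hx _ H2) C2.
case: (HG (c x)) => K [HK [[f [bf Hf]] Hno]].
have Cf : CE f by apply: iso_CE.
apply: (no_two i1 HK Hno (CE_comp C1' Cf) (CE_comp C2' Cf)) => a b /=.
have HM := plus_lin (om_lin i) HK.
apply/(emb_lt (HL _) HM Hf).
have := Hlt a b; rewrite E1 E2; case=> A B; split; first exact/(le_sum_eq (F := F)).
by move=> E; apply: B; rewrite E.
Qed.
End ShufFacts.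


Lemma block_pres i (I1 I2 : Type) (c1 : rat -> I1) (c2 : rat -> I2) (L1 : I1 -> LO) (L2 : I2 -> LO) :
  (1 <= i)%N ->
  (forall j, is_lin_order (L1 j)) -> (forall j, good_form i (L1 j)) ->
  (forall j, is_lin_order (L2 j)) -> (forall j, good_form i (L2 j)) ->
  forall (f : Shuf c1 L1 -> Shuf c2 L2) (g : Shuf c2 L2 -> Shuf c1 L1),
  cancel f g -> cancel g f -> emb g ->
  forall p q, projT1 p = projT1 q -> projT1 (f p) = projT1 (f q).
Proof.
move=> i1 HL1 HG1 HL2 HG2 f g fK gK Hg p q E.
apply: NNPP => ne.
have HS1 := S_lin c1 HL1; have HS2 := S_lin c2 HL2.
have Cg : CE g by apply: iso_CE => //; exists f.
case: (ltgtP (projT1 (f p)) (projT1 (f q))) => H.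
- have := D_transport HS2 HS1 Cg (D_diff HG2 H); rewrite !fK.
  exact: (@D_same i I1 c1 L1 i1 HL1 HG1 p q E).
- have := D_transport HS2 HS1 Cg (D_diff HG2 H); rewrite !fK.
  exact: (@D_same i I1 c1 L1 i1 HL1 HG1 q p (esym E)).
- exact: ne.
Qed.

Lemma partB i (I1 I2 : Type) (c1 : rat -> I1) (c2 : rat -> I2) (L1 : I1 -> LO) (L2 : I2 -> LO) :
  (1 <= i)%N ->
  (forall j, is_lin_order (L1 j)) -> (forall j, good_form i (L1 j)) ->
  (forall j, is_lin_order (L2 j)) -> (forall j, good_form i (L2 j)) ->
  dense_coloring c1 ->
  iso (Shuf c1 L1) (Shuf c2 L2) -> forall j1, exists j2, iso (L1 j1) (L2 j2).
Proof.
move=> i1 HL1 HG1 HL2 HG2 Hd [f [[g fK gK] Hf]] j1.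
have Hg : emb g by move=> u v; rewrite Hf !gK.
have [x [_ Ex]] := Hd 0%R 1%R ltr01 j1.
have [s0 [Es0 _]] := block_first c1 i1 HG1 x.
case: s0 Es0 => x' a0 /= Ex'; subst x'.
set y := projT1 (f (existT _ x a0)).
have Hy a : projT1 (f (existT _ x a)) = y.
  exact: (block_pres i1 HL1 HG1 HL2 HG2 fK gK Hg).
have Hx b : projT1 (g (existT _ y b)) = x.
  have Hf' : emb f by [].
  have := block_pres i1 HL2 HG2 HL1 HG1 gK fK Hf' (p := existT _ y b) (q := f (existT _ x a0)).
  by rewrite fK /= => ->.
have Ce : CE (f \o (fun a : L1 (c1 x) => existT (fun y => car (L1 (c1 y))) x a : Shuf c1 L1)).
  apply: CE_comp; first exact: (CE_block (fun z : ratLO => L1 (c1 z)) x).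
  by apply: iso_CE => //; exists g.
have [h [[Hh _] Eh]] := factor_block (e := f \o _) Hy Ce.
rewrite -Ex; exists (c2 y), h; split => //.
apply: bij_of; first exact: (emb_inj (HL1 _) (HL2 _) Hh).
move=> b; move: (Hx b); case E: (g _) => [x' a] /= Ex'; subst x'.
exists a; have := Eh a; rewrite /= -E gK => /(@existT_inj (fun z : ratLO => L2 (c2 z))) -> //.
Qed.

Lemma NP_om m (k : 'I_m) p : NP (om k p) -> p = 0.
Proof.
case: p => // p H.
have Hq : lt_of (om k p) (om k p.+1) by apply/lt_om; right.
case: (H _ Hq) => r [H1 H2].
move: H1 H2; rewrite (om_eta r) !lt_om.
case=> [Hk|[Ek Hp]]; case=> [Hk'|[Ek' Hp']].
- by move: (ltn_trans Hk Hk'); rewrite ltnn.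
- by move: Hk; rewrite Ek' ltnn.
- by move: Hk'; rewrite Ek ltnn.
- by move: (leq_ltn_trans Hp Hp'); rewrite ltnn.
Qed.

Lemma NP_pull (A B : LO) (e : A -> B) w : is_lin_order A -> is_lin_order B -> CE e ->
  NP (e w) -> NP w.
Proof.
move=> HA HB [He Hc] H q Hq.
have Hq' := proj1 (emb_lt HA HB He _ _) Hq.
case: (H _ Hq') => r [H1 H2].
case: (Hc q w r (lt_le H1) (lt_le H2)) => v Ev; subst r.
by exists v; split; apply/(emb_lt HA HB He).
Qed.

Lemma partC i (I : Type) (c : rat -> I) (L : I -> LO) :
  (1 <= i)%N -> (forall j, is_lin_order (L j)) -> (forall j, good_form i (L j)) ->
  has_interval_iso (Shuf c L) (omega_times i.+1) ->
  exists K : LO, is_lin_order K /\ exists j, iso (LOplus (omega_times i.+1) K) (L j).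
Proof.
move=> i1 HL HG /hi_CE [e Ce]; have [He Hc] := Ce.
have HS := S_lin c HL.
have HO := om_lin i.+1.
set x := projT1 (e (om ord0 0)).
have Hall : forall a, projT1 (e a) = x.
  move=> a; apply: NNPP => ne.
  set y := projT1 (e a) in ne.
  have hxy : (x < y)%R.
    rewrite lt_neqAle; apply/andP; split; first by apply/eqP => E; apply: ne.
    by apply: le_proj; apply/He; apply: om_min.
  pose rr t := iter t (fun r => (r + y) / 2%:R)%R ((x + y) / 2%:R)%R.
  have Hrr t : (x < rr t < y)%R.
    elim: t => [|t IH] /=; first by apply/andP; split; lra.
    by move: IH => /andP [A B]; apply/andP; split; lra.
  have Hrr' t : (rr t < rr t.+1)%R.
    by move: (Hrr t) => /andP [A B] /=; lra.
  have G t : exists k : 'I_i.+1, exists s, projT1 s = rr t /\ e (om k 0) = s.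
    have [s [Ps Hmin]] := block_first c i1 HG (rr t).
    move: (Hrr t) => /andP [A B].
    have H1 : le (e (om ord0 0)) s by apply: lt_le; apply: lt_proj_neq; rewrite Ps.
    have H2 : le s (e a) by apply: lt_le; apply: lt_proj_neq; rewrite Ps.
    case: (Hc _ _ _ H1 H2) => w Ew; subst s.
    have Hnp : NP (e w).
      move=> q Hq.
      have Hq1 : projT1 q <> rr t.
        move=> Eq; case: q Eq Hq => z b /= Eq; subst z => -[Hle Hne].
        by apply: Hne; apply: (lanti HS Hle); exact: Hmin.
      have Hq2 : (projT1 q < rr t)%R.
        rewrite lt_neqAle; apply/andP; split; first by apply/eqP.
        rewrite -Ps; exact: le_proj (lt_le Hq).
      have [s' [Ps' _]] := block_first c i1 HG ((projT1 q + rr t) / 2%:R)%R.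
      by exists s'; split; apply: lt_proj_neq; rewrite ?Ps Ps'; lra.
    have Hw : projT2 w = 0.
      apply: (@NP_om _ (projT1 w)); rewrite -om_eta; exact: (NP_pull HO HS Ce Hnp).
    by exists (projT1 w), (e w); split => //; rewrite (om_eta w) Hw.
  have Hind t : (t <= i.+1)%N -> exists k : 'I_i.+1, (t <= k)%N /\
                 exists s, projT1 s = rr t /\ e (om k 0) = s.
    elim: t => [|t IH] Ht.
      by case: (G 0) => k [s [Ps Es]]; exists k; split => //; exists s.
    case: (G t.+1) => k' [s' [Ps' Es']].
    case: (IH (ltnW Ht)) => k [Hk [s [Ps Es]]].
    exists k'; split; last by exists s'.
    have : @lt_of (Shuf c L) s s' by apply: lt_proj_neq; rewrite Ps Ps'.
    rewrite -Es -Es' -(emb_lt HO HS He) lt_om => -[H|[_ H]] //.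
    exact: leq_ltn_trans Hk H.
  case: (Hind i.+1 (leqnn _)) => k [Hk _].
  by move: (ltn_ord k); rewrite ltnNge Hk.
have [e' [Ce' Ee']] := factor_block Hall Ce.
case: (HG (c x)) => K [HK [Hiso Hno]].
have [f [bf Hf]] := Hiso.
have [K' [HK' Hi]] := prefix_ext i1 HK Hno (CE_comp Ce' (iso_CE bf Hf)).
exists K'; split => //; exists (c x).
exact: iso_trans Hi (iso_sym Hiso).
Qed.


Section BF.
Local Open Scope ring_scope.
Variable R : rat -> rat -> Prop.

Definition goodP (P : seq (rat * rat)) :=
  (forall u v, u \in P -> v \in P -> (u.1 < v.1) = (u.2 < v.2)) /\ forall u, u \in P -> R u.1 u.2.

Definition mx (d : rat) (s : seq rat) := foldr (fun x m => if x <= m then m else x) d s.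
Definition mn (d : rat) (s : seq rat) := foldr (fun x m => if m <= x then m else x) d s.

Lemma mx_ub d s : d <= mx d s /\ forall l, l \in s -> l <= mx d s.
Proof.
elim: s => [|x s [IH1 IH2]] /=; first by split.
case: ifP => H; split.
- exact: IH1.
- by move=> l; rewrite in_cons => /orP [/eqP ->|/IH2].
- by apply: le_trans IH1 _; apply: ltW; rewrite ltNge H.
- move=> l; rewrite in_cons => /orP [/eqP -> //|/IH2 H']; apply: le_trans H' _.
  by apply: ltW; rewrite ltNge H.
Qed.

Lemma mx_mem d s : mx d s \in d :: s.
Proof.
elim: s => [|x s IH] /=; first by rewrite inE.
case: ifP => _; last by rewrite !inE eqxx orbT.
by move: IH; rewrite !inE => /orP [->|->]; rewrite ?orbT.
Qed.

Lemma mn_lb d s : mn d s <= d /\ forall l, l \in s -> mn d s <= l.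
Proof.
elim: s => [|x s [IH1 IH2]] /=; first by split.
case: ifP => H; split.
- exact: IH1.
- by move=> l; rewrite in_cons => /orP [/eqP ->|/IH2].
- by apply: le_trans IH1; apply: ltW; rewrite ltNge H.
- move=> l; rewrite in_cons => /orP [/eqP -> //|/IH2 H']; apply: le_trans H'.
  by apply: ltW; rewrite ltNge H.
Qed.

Lemma mn_mem d s : mn d s \in d :: s.
Proof.
elim: s => [|x s IH] /=; first by rewrite inE.
case: ifP => _; last by rewrite !inE eqxx orbT.
by move: IH; rewrite !inE => /orP [->|->]; rewrite ?orbT.
Qed.

Lemma interval_exists (lo hi : seq rat) : (forall l h, l \in lo -> h \in hi -> l < h) ->
  exists p q, p < q /\ (forall l, l \in lo -> l <= p) /\ (forall h, h \in hi -> q <= h).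
Proof.
move=> H.
case: lo H => [|l0 lo]; case: hi => [|h0 hi] H.
- by exists 0, 1; split.
- exists (mn h0 hi - 1), (mn h0 hi); split; first lra.
  by split => // h Hh; move: (mn_lb h0 hi) => [A B]; move: Hh; rewrite inE => /orP [/eqP ->|/B].
- exists (mx l0 lo), (mx l0 lo + 1); split; first lra.
  by split => // l Hl; move: (mx_ub l0 lo) => [A B]; move: Hl; rewrite inE => /orP [/eqP ->|/B].
- exists (mx l0 lo), (mn h0 hi); split; first exact: H (mx_mem _ _) (mn_mem _ _).
  split.
    by move=> l Hl; move: (mx_ub l0 lo) => [A B]; move: Hl; rewrite inE => /orP [/eqP ->|/B].
  by move=> h Hh; move: (mn_lb h0 hi) => [A B]; move: Hh; rewrite inE => /orP [/eqP ->|/B].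
Qed.

Hypothesis HR1 : forall a p q, p < q -> exists b, p < b < q /\ R a b.

Lemma ext P : goodP P -> forall a, exists b, goodP ((a, b) :: P).
Proof.
move=> [G1 G2] a.
case: (classic (exists u, u \in P /\ u.1 = a)) => [[u [Hu Ea]]|Hn].
  exists u.2; split.
  - move=> x y; rewrite !in_cons => /orP [/eqP->|Hx] /orP [/eqP->|Hy] /=.
    + by rewrite !ltxx.
    + by rewrite -Ea; apply: G1.
    + by rewrite -Ea; apply: G1.
    + exact: G1.
  - move=> x; rewrite in_cons => /orP [/eqP->|Hx] /=; last exact: G2.
    by rewrite -Ea; apply: G2.
set lo := [seq u.2 | u <- P & u.1 < a].
set hi := [seq u.2 | u <- P & a < u.1].
have Hlh : forall l h, l \in lo -> h \in hi -> l < h.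
  move=> l h /mapP [u]; rewrite mem_filter => /andP [H1 H2] -> /mapP [v].
  rewrite mem_filter => /andP [H3 H4] ->.
  by rewrite -(G1 _ _ H2 H4); exact: lt_trans H1 H3.
have [p [q [pq [Hp Hq]]]] := interval_exists Hlh.
have [b [/andP [pb bq] Rb]] := HR1 a pq.
exists b.
have Hv v : v \in P -> ((v.1 < a) = (v.2 < b)) /\ ((a < v.1) = (b < v.2)).
  move=> Hv.
  case: (ltgtP v.1 a) => H.
  - have : v.2 \in lo by apply/mapP; exists v => //; rewrite mem_filter H.
    move/Hp => H'; have H'' : v.2 < b by exact: le_lt_trans H' pb.
    by rewrite H'' ltNge ltW.
  - have : v.2 \in hi by apply/mapP; exists v => //; rewrite mem_filter H.
    move/Hq => H'; have H'' : b < v.2 by exact: lt_le_trans bq H'.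
    by rewrite H'' ltNge ltW.
  - by exfalso; apply: Hn; exists v.
split.
- move=> x y; rewrite !in_cons => /orP [/eqP->|Hx] /orP [/eqP->|Hy] /=.
  + by rewrite !ltxx.
  + by case: (Hv _ Hy).
  + by case: (Hv _ Hx).
  + exact: G1.
- move=> x; rewrite in_cons => /orP [/eqP->|Hx] //=; exact: G2.
Qed.
End BF.

Definition swp (u : rat * rat) := (u.2, u.1).

Lemma swpK s : map swp (map swp s) = s.
Proof. by elim: s => [|[x y] s IH] //=; rewrite IH. Qed.

Lemma good_swap R P : goodP R P -> goodP (fun b a => R a b) (map swp P).
Proof.
move=> [G1 G2]; split.
- move=> u v /mapP [u' Hu ->] /mapP [v' Hv ->] /=; by rewrite G1.
- by move=> u /mapP [u' Hu ->] /=; apply: G2.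
Qed.

Section BF2.
Local Open Scope ring_scope.
Variable R : rat -> rat -> Prop.
Hypothesis HR1 : forall a p q, p < q -> exists b, p < b < q /\ R a b.
Hypothesis HR2 : forall b p q, p < q -> exists a, p < a < q /\ R a b.

Lemma back P : goodP R P -> forall b, exists a, goodP R ((a, b) :: P).
Proof.
move=> G b.
have [a Ha] := ext (R := fun b a => R a b) HR2 (good_swap G) b.
exists a; have := good_swap Ha; by rewrite /= swpK.
Qed.

Definition Fx P a := epsilon (inhabits 0) (fun b => goodP R ((a, b) :: P)).
Definition Gx P b := epsilon (inhabits 0) (fun a => goodP R ((a, b) :: P)).
Definition en (n : nat) : rat := odflt 0 (unpickle n).
Definition stp n P := let P1 := (en n, Fx P (en n)) :: P in (Gx P1 (en n), en n) :: P1.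
Fixpoint Pn n := if n is n'.+1 then stp n' (Pn n') else [::].

Lemma Pn_good n : goodP R (Pn n).
Proof.
elim: n => [|n IH] /=; first by split.
rewrite /stp.
have G1 : goodP R ((en n, Fx (Pn n) (en n)) :: Pn n).
  exact: (epsilon_spec (inhabits 0) (fun b => goodP R ((en n, b) :: Pn n)) (ext HR1 IH (en n))).
exact: (epsilon_spec (inhabits 0) (fun a => goodP R ((a, en n) :: _)) (back G1 (en n))).
Qed.

Lemma Pn_mono n k u : u \in Pn n -> u \in Pn (n + k).
Proof.
elim: k => [|k IH] H; first by rewrite addn0.
by rewrite addnS /= /stp !in_cons (IH H) !orbT.
Qed.

Lemma Pn_mono' n m u : (n <= m)%N -> u \in Pn n -> u \in Pn m.
Proof. by move=> /subnKC <-; apply: Pn_mono. Qed.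

Definition phi a := Fx (Pn (pickle a)) a.

Lemma phi_in a : (a, phi a) \in Pn (pickle a).+1.
Proof.
have E : en (pickle a) = a by rewrite /en pickleK.
by rewrite /= /stp E !in_cons /phi eqxx orbT.
Qed.

Lemma psi_in b : exists a, (a, b) \in Pn (pickle b).+1.
Proof.
have E : en (pickle b) = b by rewrite /en pickleK.
exists (Gx ((b, Fx (Pn (pickle b)) b) :: Pn (pickle b)) b).
by rewrite /= /stp E in_cons eqxx.
Qed.

Lemma BF : exists f : rat -> rat, (forall a a', (a < a') = (f a < f a')) /\
  (forall b, exists a, f a = b) /\ forall a, R a (f a).
Proof.
exists phi; split; last split.
- move=> a a'; set N := maxn (pickle a).+1 (pickle a').+1.
  have Ha := Pn_mono' (leq_maxl (pickle a).+1 (pickle a').+1) (phi_in a).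
  have Ha' := Pn_mono' (leq_maxr (pickle a).+1 (pickle a').+1) (phi_in a').
  exact: (proj1 (Pn_good N) _ _ Ha Ha').
- move=> b; case: (psi_in b) => a Hab; exists a.
  set N := maxn (pickle b).+1 (pickle a).+1.
  have H1 := Pn_mono' (leq_maxl (pickle b).+1 (pickle a).+1) Hab.
  have H2 := Pn_mono' (leq_maxr (pickle b).+1 (pickle a).+1) (phi_in a).
  have E1 := proj1 (Pn_good N) _ _ H1 H2.
  have E2 := proj1 (Pn_good N) _ _ H2 H1.
  move: E1 E2; rewrite /= ltxx => /esym E1 /esym E2.
  by case: (ltgtP b (phi a)) E1 E2 => // ->.
- move=> a; exact: (proj2 (Pn_good _) _ (phi_in a)).
Qed.
End BF2.

Lemma partA (I1 I2 : Type) (c1 : rat -> I1) (c2 : rat -> I2) (L1 : I1 -> LO) (L2 : I2 -> LO) :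
  (forall j, is_lin_order (L1 j)) -> (forall j, is_lin_order (L2 j)) ->
  dense_coloring c1 -> dense_coloring c2 ->
  same_class L1 L2 -> iso (Shuf c1 L1) (Shuf c2 L2).
Proof.
move=> HL1 HL2 Hd1 Hd2 [S1 S2].
pose R a b := iso (L1 (c1 a)) (L2 (c2 b)).
have HR1 : forall a p q, (p < q)%R -> exists b, (p < b < q)%R /\ R a b.
  move=> a p q pq; case: (S1 (c1 a)) => j2 Hj2.
  case: (Hd2 p q pq j2) => b [Hb Eb]; exists b; split => //; by rewrite /R Eb.
have HR2 : forall b p q, (p < q)%R -> exists a, (p < a < q)%R /\ R a b.
  move=> b p q pq; case: (S2 (c2 b)) => j1 Hj1.
  case: (Hd1 p q pq j1) => a [Ha Ea]; exists a; split => //; rewrite /R Ea; exact: iso_sym.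
have [f [Hmono [Hsurj HR]]] := BF HR1 HR2.
pose h a := proj1_sig (constructive_indefinite_description _ (HR a)).
have Hh a : bijective (h a) /\ emb (h a).
  by rewrite /h; case: constructive_indefinite_description => g [bg Hg]; split.
pose Phi (s : Shuf c1 L1) : Shuf c2 L2 :=
  existT (fun y : ratLO => car (L2 (c2 y))) (f (projT1 s)) (h (projT1 s) (projT2 s)).
have Hemb : emb Phi.
  have PhiE x (a : L1 (c1 x)) : Phi (existT _ x a) = existT (fun y : ratLO => car (L2 (c2 y))) (f x) (h x a) by [].
  move=> [x a] [y b]; rewrite !PhiE.
  case: (rat_dec x y) => [E|ne].
    subst y; rewrite (le_sum_eq (F := fun z : ratLO => L1 (c1 z))) (le_sum_eq (F := fun z : ratLO => L2 (c2 z))); exact: (proj2 (Hh x)).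
  have ne' : f x <> f y.
    move=> E; apply: ne; case: (ltgtP x y) => // H.
      by move: H; rewrite Hmono E ltxx.
    by move: H; rewrite Hmono E ltxx.
  rewrite (le_sum_neq (F := fun z : ratLO => L1 (c1 z)) _ _ ne).
  rewrite (le_sum_neq (F := fun z : ratLO => L2 (c2 z)) _ _ ne').
  by rewrite Hmono.
exists Phi; split => //.
apply: bij_of; first exact: (emb_inj (S_lin c1 HL1) (S_lin c2 HL2) Hemb).
move=> [y b]; case: (Hsurj y) => x Ex; subst y.
case: (proj1 (Hh x)) => g _ gK.
by exists (existT _ x (g b)); rewrite /Phi /= gK.
Qed.

Theorem lemma13 (i : nat) (I1 I2 : countType) (L1 : I1 -> LO) (L2 : I2 -> LO)
    (c1 : rat -> I1) (c2 : rat -> I2) :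
  (1 <= i)%N ->
  (forall j, is_lin_order (L1 j)) -> (forall j, is_lin_order (L2 j)) ->
  (forall j, good_form i (L1 j)) -> (forall j, good_form i (L2 j)) ->
  dense_coloring c1 -> dense_coloring c2 ->
  (same_class L1 L2 <-> iso (Shuf c1 L1) (Shuf c2 L2)) /\
  (has_interval_iso (Shuf c1 L1) (omega_times i.+1) ->
     exists K : LO, is_lin_order K /\ exists j, iso (LOplus (omega_times i.+1) K) (L1 j)).
Proof.
move=> i1 HL1 HL2 HG1 HG2 Hd1 Hd2; split.
- split; first exact: partA.
  move=> Hiso; split.
  + exact: (partB i1 HL1 HG1 HL2 HG2 Hd1 Hiso).
  + exact: (partB i1 HL2 HG2 HL1 HG1 Hd2 (iso_sym Hiso)).
- exact: partC i1 HL1 HG1.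
Qed.
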